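(* Let $X$ be a finite set, $f:2^X\to\mathbb{R}_{\ge0}$ a normalized monotone submodular function, $k\ge2$ and $n\ge k$ integers with $n\le|X|$, and $S^*\in\arg\max_{S\subseteq X,\,|S|\le n}f(S)$. Let $S=S_n=\{x_1,\dots,x_n\}$ be produced by the $k$-wise optimistic algorithm ($S_0=\emptyset$, $x_i\in\arg\max_{x\in X\setminus S_{i-1}}\bar f_k(x\mid S_{i-1})$, $S_i=S_{i-1}\cup\{x_i\}$), and assume $\bar f_k(x_i\mid S_{i-1})>0$ for $k<i\le n$. Then \[ f(S)\ \ge\ \left(1-e^{-\frac{1}{n}\left(k+\sum_{i=k+1}^n \frac{f(x_i\mid S_{i-1})}{\bar f_k(x_i\mid S_{i-1})}\right)}\right) f(S^* ), \] equivalently $f(S)\ge\left(1-e^{-\frac1n\left(k+\sum_{i=k+1}^n(1-c_k(x_i\mid S_{i-1}))\right)}\right)f(S^* )$.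
   Context: $f(x\mid A):=f(A\cup\{x\})-f(A)$. $k$-wise upper estimate: $\bar f_k(x\mid S):=\min_{A\subseteq S,\,|A|<k} f(x\mid A)$. The $k$-marginal curvature of $f$ at $x\in X\setminus S$ given $S$ is $c_k(x\mid S)=1-\max_{A\subseteq S,|A|<k} f(x\mid S)/f(x\mid A)=1-f(x\mid S)/\bar f_k(x\mid S)$. *)

(* Defs.v *)
From HB Require Import structures.
From mathcomp Require Import all_boot all_order all_algebra.
From mathcomp Require Import reals sequences exp.
Set Implicit Arguments. Unset Strict Implicit. Unset Printing Implicit Defensive.
Import Order.TTheory GRing.Theory Num.Theory.
Local Open Scope ring_scope.

Section SubmodDefs.
Variables (R : realType) (X : finType).
Implicit Types (f : {set X} -> R) (A B S : {set X}) (x : X).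

Definition normalized f := f set0 = 0.
Definition nonneg_setfun f := forall A, 0 <= f A.
Definition monotone_setfun f := forall A B, A \subset B -> f A <= f B.
Definition submodular f := forall A B, f (A :|: B) + f (A :&: B) <= f A + f B.

Definition marginal f x A : R := f (x |: A) - f A.

(* k-wise upper estimate: min over A ⊆ S with |A| < k of f(x | A).
   The default value f(x | ∅) is itself one of the minimized terms when k >= 1. *)
Definition upper_est (k : nat) f x S : R :=
  \big[Num.min/marginal f x set0]_(A : {set X} | (A \subset S) && (#|A| < k)%N)
     marginal f x A.

(* S_i = {x_0, ..., x_{i-1}} (0-based indexing of the chosen elements) *)
Definition prefix_set (xs : nat -> X) (i : nat) : {set X} :=
  [set xs (nat_of_ord j) | j : 'I_i].

Definition kwise_optimistic_run (k : nat) f (n : nat) (xs : nat -> X) :=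
  forall i, (i < n)%N ->
    xs i \notin prefix_set xs i /\
    forall y, y \notin prefix_set xs i ->
      upper_est k f y (prefix_set xs i) <= upper_est k f (xs i) (prefix_set xs i).

End SubmodDefs.

(* Main.v *)
Require Import Defs.
From HB Require Import structures.
From mathcomp Require Import all_boot all_order all_algebra.
From mathcomp Require Import reals sequences exp.
From mathcomp Require Import ring lra.
Import Order.TTheory GRing.Theory Num.Theory.
Local Open Scope ring_scope.

Section Aux.
Variables (R : realType) (X : finType) (f : {set X} -> R).
Hypotheses (fmono : monotone_setfun f) (fsub : submodular f).

Lemma marg_ge0 x (A : {set X}) : 0 <= marginal f x A.
Proof. by rewrite /marginal subr_ge0; apply: fmono; apply: subsetUr. Qed.

Lemma marg_anti x (A B : {set X}) : A \subset B -> marginal f x B <= marginal f x A.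
Proof.
move=> AB; rewrite /marginal.
have h := fsub (x |: A) B.
have e : (x |: A) :|: B = x |: B.
  by rewrite -setUA (setUidPr AB).
rewrite e in h.
have h2 : f A <= f ((x |: A) :&: B).
  apply: fmono; rewrite subsetI AB andbT; exact: subsetUr.
lra.
Qed.

Lemma upper_ge k x (S : {set X}) : marginal f x S <= upper_est k f x S.
Proof.
rewrite /upper_est; elim/big_ind: _ => //.
- by apply: marg_anti; apply: sub0set.
- by move=> a b ha hb; rewrite le_min ha hb.
- by move=> A /andP[AS _]; apply: marg_anti.
Qed.

Lemma upper_le k x (S A : {set X}) : A \subset S -> (#|A| < k)%N ->
  upper_est k f x S <= marginal f x A.
Proof.
move=> AS Ak; rewrite /upper_est (bigD1 A) /=; last by rewrite AS Ak.
by rewrite ge_min lexx.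
Qed.

Lemma cover_seq (A : {set X}) (s : seq X) :
  f (A :|: [set y in s]) <= f A + \sum_(y <- s) marginal f y A.
Proof.
elim: s => [|y s IH].
  rewrite big_nil addr0.
  have -> : [set y in [::]] = (set0 : {set X}) by apply/setP => z; rewrite inE.
  by rewrite setU0.
rewrite big_cons.
have -> : A :|: [set z in y :: s] = y |: (A :|: [set z in s]).
  by apply/setP => z; rewrite !inE; case: (z == y); rewrite ?orbT.
have := @marg_anti y _ _ (subsetUl A [set z in s]).
rewrite /marginal; lra.
Qed.

End Aux.
Arguments marg_ge0 {R X f}.
Arguments marg_anti {R X f}.
Arguments upper_ge {R X f}.
Arguments upper_le {R X f}.
Arguments cover_seq {R X f}.

Lemma mem_prefix (X : finType) (xs : nat -> X) i y :
  (y \in prefix_set xs i) = [exists j : 'I_i, xs j == y].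
Proof.
apply/imsetP/existsP => [[j _ ->]|[j /eqP <-]]; first by exists j.
by exists j.
Qed.

Lemma prefixS (X : finType) (xs : nat -> X) i :
  prefix_set xs i.+1 = xs i |: prefix_set xs i.
Proof.
apply/setP => y; rewrite in_setU1 !mem_prefix.
apply/existsP/idP => [[j /eqP <-]|].
  case: (ltnP j i) => ji.
    by apply/orP; right; apply/existsP; exists (Ordinal ji).
  have -> : (j : nat) = i by have := ltn_ord j; rewrite ltnS => h; apply/eqP; rewrite eqn_leq h ji.
  by rewrite eqxx.
case/orP => [/eqP ->|/existsP [j /eqP <-]].
  by exists ord_max.
by exists (widen_ord (leqnSn i) j).
Qed.

Lemma card_prefix (X : finType) (xs : nat -> X) i : (#|prefix_set xs i| <= i)%N.
Proof. by rewrite /prefix_set; apply: leq_trans (leq_imset_card _ _) _; rewrite card_ord. Qed.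
Arguments card_prefix {X}.

Theorem corollary2 (R : realType) (X : finType) (f : {set X} -> R)
    (k n : nat) (Sopt : {set X}) (xs : nat -> X) :
  nonneg_setfun f -> normalized f -> monotone_setfun f -> submodular f ->
  (2 <= k)%N -> (k <= n)%N -> (n <= #|X|)%N ->
  (#|Sopt| <= n)%N ->
  (forall T : {set X}, (#|T| <= n)%N -> f T <= f Sopt) ->
  kwise_optimistic_run k f n xs ->
  (forall i, (k <= i)%N -> (i < n)%N -> 0 < upper_est k f (xs i) (prefix_set xs i)) ->
  f (prefix_set xs n) >=
    (1 - expR (- (n%:R^-1 *
        (k%:R + \sum_(k <= i < n)
                   marginal f (xs i) (prefix_set xs i)
                   / upper_est k f (xs i) (prefix_set xs i))))) * f Sopt.
Proof.
move=> f0 fn fm fs k2 kn nX Sc Sopt_max run upos.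
set OPT := f Sopt.
pose rho i := if (i < k)%N then 1 else
   marginal f (xs i) (prefix_set xs i) / upper_est k f (xs i) (prefix_set xs i).
have n0 : (0 < n)%N by apply: leq_trans kn; apply: leq_trans k2.
have OPT0 : 0 <= OPT by apply: f0.
pose v := n%:R^-1 : R.
have nv : n%:R * v = 1 by rewrite /v mulfV // pnatr_eq0 -lt0n.
have v0 : 0 <= v by rewrite /v invr_ge0 ler0n.
have key : forall j, (j <= n)%N -> OPT - f (prefix_set xs j) <=
    expR (- (v * \sum_(0 <= i < j) rho i)) * OPT.
  elim => [|j IH] jn.
    rewrite big_geq // mulr0 oppr0 expR0 mul1r.
    have -> : prefix_set xs 0 = set0.
      by apply: cards0_eq; apply/eqP; rewrite -leqn0; apply: card_prefix.
    rewrite fn; lra.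
  have jlt : (j < n)%N by [].
  have IH' := IH (ltnW jlt).
  set S := prefix_set xs j in IH' *.
  set x := xs j.
  set u := upper_est k f x S.
  set m := marginal f x S.
  set g := OPT - f S in IH' *.
  have fS1 : f (prefix_set xs j.+1) = f S + m by rewrite prefixS /m /marginal addrC subrK.
  have g0 : 0 <= g.
    rewrite subr_ge0; apply: Sopt_max; exact: (@leq_trans j _ _ (card_prefix xs j) (ltnW jlt)).
  have m0 : 0 <= m by apply: marg_ge0.
  have mu : m <= u by apply: upper_ge.
  have gu : g <= n%:R * u.
    pose T := Sopt :\: S.
    have h1 : OPT <= f (S :|: [set y in enum T]).
      rewrite set_enum; apply: fm; apply/subsetP => y; rewrite !inE.
      by case: (y \in S).
    have h2 := cover_seq fm fs S (enum T).
    have h3 : \sum_(y <- enum T) marginal f y S <= \sum_(y <- enum T) u.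
      rewrite big_seq [X in _ <= X]big_seq; apply: ler_sum => y.
      rewrite mem_enum inE => /andP[yS _].
      apply: le_trans (upper_ge fm fs k y S) _.
      exact: (run j jlt).2 y yS.
    rewrite [X in _ <= X]big_enum sumr_const /= in h3.
    have h4 : u *+ #|T| <= n%:R * u.
      rewrite -[u *+ _]mulr_natl. apply: ler_wpM2r; first exact: le_trans mu.
      rewrite ler_nat; apply: leq_trans Sc; apply: subset_leq_card; exact: subsetDl.
    rewrite /g; lra.
  have step : g - m <= (1 - v * rho j) * g.
    rewrite /rho; case: ifP => jk.
      have um : u <= m by apply: upper_le => //; exact: (@leq_ltn_trans j _ _ (card_prefix xs j) jk).
      rewrite mulr1.
      have : v * g <= v * (n%:R * u) by apply: ler_wpM2l.
      rewrite mulrA (mulrC v n%:R) nv mul1r => h; lra.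
    have upos' : 0 < u by apply: upos => //; rewrite leqNgt jk.
    fold x S u m.
    pose w := u^-1.
    have h : v * w * g <= 1.
      have e : v * w * (n%:R * u) = 1.
        rewrite /v /w; field; apply/andP; split; first by rewrite gt_eqF.
        by rewrite pnatr_eq0 -lt0n.
      rewrite -e; apply: ler_wpM2l => //; rewrite mulr_ge0 // invr_ge0; exact: ltW.
    rewrite -/w.
    have : 0 <= m * (1 - v * w * g) by apply: mulr_ge0 => //; lra.
    nra.
  have a1 : v * rho j <= 1.
    have : rho j <= 1.
      rewrite /rho; case: ifP => // jk.
      have upos' : 0 < u by apply: upos => //; rewrite leqNgt jk.
      by rewrite ler_pdivrMr // mul1r.
    have : v <= 1 by rewrite /v invf_le1 // ?ler1n // ltr0n.
    have : 0 <= rho j.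
      rewrite /rho; case: ifP => // jk.
      have upos' : 0 < u by apply: upos => //; rewrite leqNgt jk.
      by apply: divr_ge0 => //; apply: ltW.
    nra.
  have ex := expR_ge1Dx (- (v * rho j)).
  have E0 : 0 <= expR (- (v * \sum_(0 <= i < j) rho i)) * OPT.
    by apply: mulr_ge0 => //; apply: expR_ge0.
  rewrite big_nat_recr //= mulrDr opprD expRD fS1.
  set E := expR (- (v * \sum_(0 <= i < j) rho i)) in IH' E0 *.
  set a := v * rho j in step a1 ex *.
  set Ea := expR (- a) in ex *.
  have : (1 - a) * g <= (1 - a) * (E * OPT) by apply: ler_wpM2l => //; lra.
  have : (1 - a) * (E * OPT) <= Ea * (E * OPT) by apply: ler_wpM2r => //; lra.
  move=> h1 h2; rewrite /g in step h2; lra.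
have := key n (leqnn n).
have -> : \sum_(0 <= i < n) rho i = k%:R + \sum_(k <= i < n)
      marginal f (xs i) (prefix_set xs i) / upper_est k f (xs i) (prefix_set xs i).
  rewrite (@big_cat_nat _ _ _ k 0 n _ _ (leq0n k) kn) /=; congr (_ + _).
    rewrite (@eq_big_nat _ _ _ 0 k _ (fun _ => 1)); last first.
      by move=> i /andP[_ ik]; rewrite /rho ik.
    by rewrite sumr_const_nat subn0.
  by apply: eq_big_nat => i /andP[ki _]; rewrite /rho ltnNge ki.
rewrite /v; lra.
Qed.
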